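(* $\mathsf{G}_\mathbb{R} = \mathsf{G}_{\mathrm{rel}}$; that is, an $\mathcal L$-formula is valid over the class of all flows (real-valued semantics) if and only if it is valid over the class of all bi-relational frames.
   Context: Fix a countably infinite set $\mathbb P$ of propositional variables. The language $\mathcal L$ is given by the grammar $\varphi,\psi ::= p \mid \varphi\wedge\psi \mid \varphi\vee\psi \mid \varphi\Rightarrow\psi \mid \varphi\Leftarrow\psi \mid \mathsf X\varphi \mid \mathsf Y\varphi \mid \mathsf G\varphi \mid \mathsf H\varphi \mid \varphi\,\mathsf U\,\psi \mid \varphi\,\mathsf S\,\psi$ with $p\in\mathbb P$ ($\Leftarrow$ is co-implication). Abbreviations: $\top:=p_0\Rightarrow p_0$, $\bot:=p_0\Leftarrow p_0$ for a fixed $p_0\in\mathbb P$, $\neg\varphi:=\varphi\Rightarrow\bot$, $\varphi\Leftrightarrow\psi:=(\varphi\Rightarrow\psi)\wedge(\psi\Rightarrow\varphi)$, $\mathsf F\varphi:=\top\,\mathsf U\,\varphi$, $\mathsf P\varphi:=\top\,\mathsf S\,\varphi$. Real-valued semantics: a flow is a pair $(T,S)$ with $S\colon T\to T$ a bijection. A real valuation is $V\colon\mathcal L\times T\to[0,1]$ such that for all $t$: $V(\varphi\wedge\psi,t)=\min\{V(\varphi,t),V(\psi,t)\}$; $V(\varphi\vee\psi,t)=\max\{V(\varphi,t),V(\psi,t)\}$; $V(\varphi\Rightarrow\psi,t)=1$ if $V(\varphi,t)\le V(\psi,t)$ and $=V(\psi,t)$ otherwise; $V(\varphi\Leftarrow\psi,t)=0$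 if $V(\varphi,t)\le V(\psi,t)$ and $=V(\varphi,t)$ otherwise; $V(\mathsf X\varphi,t)=V(\varphi,S(t))$; $V(\mathsf Y\varphi,t)=V(\varphi,S^{-1}(t))$; $V(\mathsf G\varphi,t)=\inf_{n\ge0}V(\varphi,S^n(t))$; $V(\mathsf H\varphi,t)=\inf_{n\ge0}V(\varphi,S^{-n}(t))$; $V(\varphi\,\mathsf U\,\psi,t)=\sup_{n\ge0}\min\{V(\varphi,S^0(t)),\dots,V(\varphi,S^{n-1}(t)),V(\psi,S^n(t))\}$; $V(\varphi\,\mathsf S\,\psi,t)=\sup_{n\ge0}\min\{V(\varphi,S^0(t)),\dots,V(\varphi,S^{-(n-1)}(t)),V(\psi,S^{-n}(t))\}$. $\mathsf G_\mathbb R$ is the set of $\varphi$ with $V(\varphi,t)=1$ for every flow, every real valuation on it and every $t$. Bi-relational semantics: a bi-relational frame is $(W,T,\le,S)$ with $(W,\le)$ a linear order and $(T,S)$ a flow. A bi-relational valuation is $[\![\cdot]\!]\colon\mathcal L\to 2^{W\times T}$ with each $[\![p]\!]$ downward closed in the first coordinate (if $(w,t)\in[\![p]\!]$ and $v\le w$ then $(v,t)\in[\![p]\!]$), and: $[\![\varphi\wedge\psi]\!]=[\![\varphi]\!]\cap[\![\psi]\!]$; $[\![\varphi\vee\psi]\!]=[\![\varphi]\!]\cup[\![\psi]\!]$; $(w,t)\in[\![\varphi\Rightarrow\psi]\!]$ iff for all $v\le w$, $(v,t)\in[\![\varphi]\!]$ implies $(v,t)\in[\![\psi]\!]$; $(w,t)\in[\![\varphi\Leftarrow\psi]\!]$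 iff there is $v\ge w$ with $(v,t)\in[\![\varphi]\!]$ and $(v,t)\notin[\![\psi]\!]$; $(w,t)\in[\![\mathsf X\varphi]\!]$ iff $(w,S(t))\in[\![\varphi]\!]$; $(w,t)\in[\![\mathsf Y\varphi]\!]$ iff $(w,S^{-1}(t))\in[\![\varphi]\!]$; $(w,t)\in[\![\mathsf G\varphi]\!]$ iff $(w,S^n(t))\in[\![\varphi]\!]$ for all $n\ge0$; $(w,t)\in[\![\mathsf H\varphi]\!]$ iff $(w,S^{-n}(t))\in[\![\varphi]\!]$ for all $n\ge0$; $(w,t)\in[\![\varphi\,\mathsf U\,\psi]\!]$ iff there is $n\ge0$ with $(w,S^i(t))\in[\![\varphi]\!]$ for $0\le i<n$ and $(w,S^n(t))\in[\![\psi]\!]$; $(w,t)\in[\![\varphi\,\mathsf S\,\psi]\!]$ iff there is $n\ge0$ with $(w,S^{-i}(t))\in[\![\varphi]\!]$ for $0\le i<n$ and $(w,S^{-n}(t))\in[\![\psi]\!]$. $\mathsf G_{\mathrm{rel}}$ is the set of $\varphi$ with $[\![\varphi]\!]=W\times T$ for every bi-relational frame and every valuation on it. *)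

(* Defs.v *)
From Stdlib Require Import Reals List.
Import ListNotations.
Open Scope R_scope.

Inductive form : Type :=
| Var   : nat -> form
| And   : form -> form -> form
| Or    : form -> form -> form
| Imp   : form -> form -> form
| Coimp : form -> form -> form
| Next  : form -> form
| Prev  : form -> form
| Glob  : form -> form
| Hist  : form -> form
| Until : form -> form -> form
| Since : form -> form -> form.

Definition Top : form := Imp (Var 0) (Var 0).
Definition Bot : form := Coimp (Var 0) (Var 0).
Definition Neg (a : form) : form := Imp a Bot.

Definition is_flow {T : Type} (S Sinv : T -> T) : Prop :=
  (forall t, Sinv (S t) = t) /\ (forall t, S (Sinv t) = t).

Definition iterf {T : Type} (n : nat) (f : T -> T) (t : T) : T := Nat.iter n f t.

Definition is_glb (E : R -> Prop) (m : R) : Prop :=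
  (forall x, E x -> m <= x) /\ (forall b, (forall x, E x -> b <= x) -> b <= m).

Definition min_prefix (f : nat -> R) (n : nat) (g : R) : R :=
  fold_right Rmin g (map f (seq 0 n)).

Definition real_valuation {T : Type} (S Sinv : T -> T) (V : form -> T -> R) : Prop :=
  (forall a t, 0 <= V a t <= 1) /\
  forall t,
  (forall a b, V (And a b) t = Rmin (V a t) (V b t)) /\
  (forall a b, V (Or a b) t = Rmax (V a t) (V b t)) /\
  (forall a b, V (Imp a b) t = if Rle_dec (V a t) (V b t) then 1 else V b t) /\
  (forall a b, V (Coimp a b) t = if Rle_dec (V a t) (V b t) then 0 else V a t) /\
  (forall a, V (Next a) t = V a (S t)) /\
  (forall a, V (Prev a) t = V a (Sinv t)) /\
  (forall a, is_glb (fun x => exists n, x = V a (iterf n S t)) (V (Glob a) t)) /\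
  (forall a, is_glb (fun x => exists n, x = V a (iterf n Sinv t)) (V (Hist a) t)) /\
  (forall a b, is_lub (fun x => exists n,
        x = min_prefix (fun i => V a (iterf i S t)) n (V b (iterf n S t)))
        (V (Until a b) t)) /\
  (forall a b, is_lub (fun x => exists n,
        x = min_prefix (fun i => V a (iterf i Sinv t)) n (V b (iterf n Sinv t)))
        (V (Since a b) t)).

Definition valid_real (phi : form) : Prop :=
  forall (T : Type) (S Sinv : T -> T) (V : form -> T -> R),
    is_flow S Sinv -> real_valuation S Sinv V -> forall t, V phi t = 1.

Definition linear_order {W : Type} (le : W -> W -> Prop) : Prop :=
  (forall w, le w w) /\
  (forall u v w, le u v -> le v w -> le u w) /\
  (forall u v, le u v -> le v u -> u = v) /\
  (forall u v, le u v \/ le v u).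

(* Bi-relational valuation: den a w t  means (w,t) in [[a]]. *)
Definition birel_valuation {W T : Type} (le : W -> W -> Prop) (S Sinv : T -> T)
    (den : form -> W -> T -> Prop) : Prop :=
  (forall p w v t, den (Var p) w t -> le v w -> den (Var p) v t) /\
  forall w t,
  (forall a b, den (And a b) w t <-> den a w t /\ den b w t) /\
  (forall a b, den (Or a b) w t <-> den a w t \/ den b w t) /\
  (forall a b, den (Imp a b) w t <-> forall v, le v w -> den a v t -> den b v t) /\
  (forall a b, den (Coimp a b) w t <-> exists v, le w v /\ den a v t /\ ~ den b v t) /\
  (forall a, den (Next a) w t <-> den a w (S t)) /\
  (forall a, den (Prev a) w t <-> den a w (Sinv t)) /\
  (forall a, den (Glob a) w t <-> forall n, den a w (iterf n S t)) /\
  (forall a, den (Hist a) w t <-> forall n, den a w (iterf n Sinv t)) /\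
  (forall a b, den (Until a b) w t <-> exists n,
      (forall i, (i < n)%nat -> den a w (iterf i S t)) /\ den b w (iterf n S t)) /\
  (forall a b, den (Since a b) w t <-> exists n,
      (forall i, (i < n)%nat -> den a w (iterf i Sinv t)) /\ den b w (iterf n Sinv t)).

Definition valid_rel (phi : form) : Prop :=
  forall (W T : Type) (le : W -> W -> Prop) (S Sinv : T -> T)
         (den : form -> W -> T -> Prop),
    linear_order le -> is_flow S Sinv -> birel_valuation le S Sinv den ->
    forall w t, den phi w t.

(* Main.v *)
Require Import Defs.
From Stdlib Require Import Reals Lra Lia List ZArith Cantor.
From Stdlib Require Import ClassicalDescription ClassicalEpsilon Classical ProofIrrelevance.


Fixpoint dec (f n : nat) : form :=
  match f with
  | O => Var 0
  | S f' =>
    let (tag, r) := Cantor.of_nat n in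
    let (x, y) := Cantor.of_nat r in
    match tag with
    | 0 => Var x
    | 1 => And (dec f' x) (dec f' y)
    | 2 => Or (dec f' x) (dec f' y)
    | 3 => Imp (dec f' x) (dec f' y)
    | 4 => Coimp (dec f' x) (dec f' y)
    | 5 => Next (dec f' x)
    | 6 => Prev (dec f' x)
    | 7 => Glob (dec f' x)
    | 8 => Hist (dec f' x)
    | 9 => Until (dec f' x) (dec f' y)
    | _ => Since (dec f' x) (dec f' y)
    end
  end.

Fixpoint fsize (a : form) : nat :=
  match a with
  | Var _ => 1
  | And a b | Or a b | Imp a b | Coimp a b | Until a b | Since a b => S (max (fsize a) (fsize b))
  | Next a | Prev a | Glob a | Hist a => S (fsize a)
  end.

Lemma dec_surj a : exists n, forall f, (fsize a <= f)%nat -> dec f n = a.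
Proof.
  induction a; simpl.
  1: { exists (Cantor.to_nat (0, Cantor.to_nat (n, 0)))%nat. intros [|f] Hf; [lia|].
    cbn [dec]. rewrite !Cantor.cancel_of_to. reflexivity. }
  all: try (destruct IHa1 as [n1 H1]; destruct IHa2 as [n2 H2]).
  all: try (destruct IHa as [n1 H1]).
  1: exists (Cantor.to_nat (1, Cantor.to_nat (n1, n2)))%nat.
  2: exists (Cantor.to_nat (2, Cantor.to_nat (n1, n2)))%nat.
  3: exists (Cantor.to_nat (3, Cantor.to_nat (n1, n2)))%nat.
  4: exists (Cantor.to_nat (4, Cantor.to_nat (n1, n2)))%nat.
  5: exists (Cantor.to_nat (5, Cantor.to_nat (n1, 0)))%nat.
  6: exists (Cantor.to_nat (6, Cantor.to_nat (n1, 0)))%nat.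
  7: exists (Cantor.to_nat (7, Cantor.to_nat (n1, 0)))%nat.
  8: exists (Cantor.to_nat (8, Cantor.to_nat (n1, 0)))%nat.
  9: exists (Cantor.to_nat (9, Cantor.to_nat (n1, n2)))%nat.
  10: exists (Cantor.to_nat (10, Cantor.to_nat (n1, n2)))%nat.
  all: intros [|f] Hf; [lia|]; cbn [dec]; rewrite !Cantor.cancel_of_to;
    try rewrite H1 by lia; try rewrite H2 by lia; reflexivity.
Qed.

Definition enum_form (m : nat) : form := let (f, n) := Cantor.of_nat m in dec f n.

Lemma enum_form_surj a : exists m, enum_form m = a.
Proof.
  destruct (dec_surj a) as [n Hn]. exists (Cantor.to_nat (fsize a, n)).
  unfold enum_form. rewrite Cantor.cancel_of_to. apply Hn. lia.
Qed.

Definition enum_Z (m : nat) : Z := let (p, q) := Cantor.of_nat m in (Z.of_nat p - Z.of_nat q)%Z.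

Lemma enum_Z_surj z : exists m, enum_Z m = z.
Proof.
  exists (Cantor.to_nat (Z.to_nat z, Z.to_nat (- z))). unfold enum_Z.
  rewrite Cantor.cancel_of_to. lia.
Qed.

Definition enum_FZ (m : nat) : form * Z :=
  let (x, y) := Cantor.of_nat m in (enum_form x, enum_Z y).

Lemma enum_FZ_surj a k : exists m, enum_FZ m = (a, k).
Proof.
  destruct (enum_form_surj a) as [x Hx], (enum_Z_surj k) as [y Hy].
  exists (Cantor.to_nat (x, y)). unfold enum_FZ. rewrite Cantor.cancel_of_to, Hx, Hy. reflexivity.
Qed.

Definition enum_FFZ (m : nat) : form * form * Z :=
  let (x, y) := Cantor.of_nat m in (enum_form x, fst (enum_FZ y), snd (enum_FZ y)).

Lemma enum_FFZ_surj a b k : exists m, enum_FFZ m = (a, b, k).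
Proof.
  destruct (enum_form_surj a) as [x Hx], (enum_FZ_surj b k) as [y Hy].
  exists (Cantor.to_nat (x, y)). unfold enum_FFZ. rewrite Cantor.cancel_of_to, Hx, Hy. reflexivity.
Qed.

Section Shift.
Context {T : Type} (S Sinv : T -> T) (t0 : T).
Hypothesis Hf : is_flow S Sinv.

Definition shift (k : Z) : T :=
  if Z.leb 0 k then iterf (Z.to_nat k) S t0 else iterf (Z.to_nat (- k)) Sinv t0.

Lemma shift_succ k : S (shift k) = shift (Z.succ k).
Proof.
  unfold shift. destruct (Z.leb_spec 0 k), (Z.leb_spec 0 (Z.succ k)); try lia.
  - rewrite Z2Nat.inj_succ by lia. reflexivity.
  - assert (k = -1 \/ Z.succ k < 0)%Z as [->|Hk] by lia.
    + simpl. apply Hf.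
    + lia.
  - replace (Z.to_nat (- k)) with (Nat.succ (Z.to_nat (- Z.succ k)))%nat. simpl. apply Hf. rewrite <- Z2Nat.inj_succ by lia. f_equal. lia.
Qed.

Lemma shift_pred k : Sinv (shift k) = shift (Z.pred k).
Proof.
  rewrite <- (Z.succ_pred k) at 1. rewrite <- shift_succ. apply Hf.
Qed.

Lemma iter_shift_S n k : iterf n S (shift k) = shift (iterf n Z.succ k).
Proof.
  induction n. reflexivity. unfold iterf in *. simpl. rewrite IHn. apply shift_succ.
Qed.

Lemma iter_shift_Sinv n k : iterf n Sinv (shift k) = shift (iterf n Z.pred k).
Proof.
  induction n. reflexivity. unfold iterf in *. simpl. rewrite IHn. apply shift_pred.
Qed.

Lemma shift0 : shift 0 = t0.
Proof. reflexivity. Qed.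
End Shift.

Lemma Zflow : is_flow Z.succ Z.pred.
Proof. split; intros; lia. Qed.
Local Open Scope R_scope.

Definition pw (n : nat) : R := / 2 ^ n.

Lemma pw_pos n : 0 < pw n.
Proof. unfold pw. apply Rinv_0_lt_compat, pow_lt; lra. Qed.

Lemma pw_S n : pw (S n) = pw n / 2.
Proof. unfold pw. simpl. rewrite Rinv_mult. lra. Qed.

Lemma pow2_ge n : INR n + 1 <= 2 ^ n.
Proof.
  induction n. simpl. lra. rewrite S_INR. simpl.
  assert (1 <= 2 ^ n) by (apply pow_R1_Rle; lra). lra.
Qed.

Lemma pw_small eps : 0 < eps -> exists N, pw N < eps.
Proof.
  intros He. destruct (archimed (/ eps)) as [H1 _].
  set (z := up (/eps)) in *.
  assert (0 < IZR z). { assert (0 < / eps) by (apply Rinv_0_lt_compat; lra). lra. }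
  assert (0 <= z)%Z by (apply le_IZR; lra).
  exists (Z.to_nat z). unfold pw.
  pose proof (pow2_ge (Z.to_nat z)). rewrite INR_IZR_INZ, Z2Nat.id in H2 by lia.
  assert (/ eps < 2 ^ Z.to_nat z) by lra.
  apply Rinv_lt_contravar in H3.
  rewrite Rinv_inv in H3. lra.
  apply Rmult_lt_0_compat. apply Rinv_0_lt_compat; lra. lra.
Qed.

Definition ind (P : Prop) (x : R) : R :=
  if excluded_middle_informative P then x else 0.

Fixpoint s (N : nat) (P : nat -> Prop) : R :=
  match N with
  | O => 0
  | S N' => s N' P + ind (P N') (pw (S N'))
  end.

Lemma ind_bounds P x : 0 <= x -> 0 <= ind P x <= x.
Proof. unfold ind; destruct excluded_middle_informative; lra. Qed.

Lemma s_ext N P Q : (forall m, (m < N)%nat -> (P m <-> Q m)) -> s N P = s N Q.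
Proof.
  induction N; simpl; intros H. reflexivity.
  rewrite IHN by (intros; apply H; lia).
  specialize (H N ltac:(lia)).
  unfold ind. destruct (excluded_middle_informative (P N)), (excluded_middle_informative (Q N)); try reflexivity;
  exfalso; tauto.
Qed.

Lemma s_True N : s N (fun _ => True) = 1 - pw N.
Proof.
  induction N; simpl. unfold pw; simpl; lra.
  rewrite IHN. unfold ind. destruct excluded_middle_informative; [|tauto].
  rewrite pw_S. lra.
Qed.

Lemma s_nonneg N P : 0 <= s N P.
Proof. induction N; simpl. lra. pose proof (ind_bounds (P N) _ (Rlt_le _ _ (pw_pos (S N)))). lra. Qed.

Lemma s_monoN N M P : (N <= M)%nat -> s N P <= s M P.
Proof.
  induction 1. lra. simpl. pose proof (ind_bounds (P m) _ (Rlt_le _ _ (pw_pos (S m)))). lra.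
Qed.

Lemma s_strict N P Q m0 : (forall m, Q m -> P m) -> P m0 -> ~ Q m0 ->
  s N Q + (if Nat.ltb m0 N then pw (S m0) else 0) <= s N P.
Proof.
  intros HQP HP HQ. induction N. simpl; lra. cbn [s].
  pose proof (pw_pos (S N)).
  unfold ind. destruct (excluded_middle_informative (Q N)), (excluded_middle_informative (P N));
  destruct (Nat.ltb_spec m0 N), (Nat.ltb_spec m0 (S N)); try lia; try lra;
  try (exfalso; auto; fail); assert (m0 = N) by lia; subst; first [tauto | lra].
Qed.

Lemma s_mono N P Q : (forall m, Q m -> P m) -> s N Q <= s N P.
Proof.
  intros H. induction N; simpl. lra. unfold ind.
  destruct (excluded_middle_informative (Q N)), (excluded_middle_informative (P N)); try lra.
  exfalso; auto. pose proof (pw_pos (S N)); lra.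
Qed.

Lemma s_tail N M P : (N <= M)%nat -> s M P <= s N P + pw N - pw M.
Proof.
  induction 1. lra. simpl.
  pose proof (ind_bounds (P m) _ (Rlt_le _ _ (pw_pos (S m)))). rewrite pw_S in *. lra.
Qed.

Lemma s_le1 N P : s N P <= 1.
Proof. pose proof (s_tail 0 N P ltac:(lia)). simpl in H. pose proof (pw_pos N). unfold pw in *; simpl in *. lra. Qed.

Definition Hset (P : nat -> Prop) : R -> Prop := fun x => exists N, x = s N P.

Lemma Hset_bound P : bound (Hset P).
Proof. exists 1. intros x [N ->]. apply s_le1. Qed.

Lemma Hset_ne P : exists x, Hset P x.
Proof. exists (s 0 P). exists 0%nat. reflexivity. Qed.

Definition H (P : nat -> Prop) : R := proj1_sig (completeness _ (Hset_bound P) (Hset_ne P)).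

Lemma H_lub P : is_lub (Hset P) (H P).
Proof. unfold H. destruct completeness. assumption. Qed.

Lemma H_ub N P : s N P <= H P.
Proof. destruct (H_lub P) as [H1 _]. apply H1. exists N; reflexivity. Qed.

Lemma H_le P b : (forall N, s N P <= b) -> H P <= b.
Proof. intros Hb. destruct (H_lub P) as [_ H2]. apply H2. intros x [N ->]. apply Hb. Qed.

Lemma H_tail N P : H P <= s N P + pw N.
Proof.
  apply H_le. intros M. destruct (Nat.le_gt_cases N M).
  - pose proof (s_tail N M P H0). pose proof (pw_pos M). lra.
  - pose proof (s_monoN M N P ltac:(lia)). pose proof (pw_pos N). lra.
Qed.

Lemma H_bounds P : 0 <= H P <= 1.
Proof.
  split. pose proof (H_ub 0 P). simpl in H0. lra.
  apply H_le. intros; apply s_le1.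
Qed.

Lemma H_mono P Q : (forall m, Q m -> P m) -> H Q <= H P.
Proof. intros HQP. apply H_le. intros N. eapply Rle_trans. apply (s_mono N P Q HQP). apply H_ub. Qed.

Lemma H_ext P Q : (forall m, P m <-> Q m) -> H P = H Q.
Proof. intros E. apply Rle_antisym; apply H_mono; firstorder. Qed.

Lemma le_eps x b : (forall eps, 0 < eps -> x <= b + eps) -> x <= b.
Proof.
  intros Hx. destruct (Rle_or_lt x b). auto.
  specialize (Hx ((x - b)/2) ltac:(lra)). lra.
Qed.

Lemma H_True : H (fun _ => True) = 1.
Proof.
  apply Rle_antisym. apply H_bounds.
  apply le_eps. intros eps He. destruct (pw_small eps He) as [N HN].
  pose proof (H_ub N (fun _ => True)). rewrite s_True in H0. lra.
Qed.

Lemma H_False : H (fun _ => False) = 0.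
Proof.
  apply Rle_antisym; [|apply H_bounds]. apply H_le. intros N.
  induction N; simpl. lra. unfold ind. destruct excluded_middle_informative. tauto. lra.
Qed.

Lemma H_strict P Q m0 : (forall m, Q m -> P m) -> P m0 -> ~ Q m0 -> H Q < H P.
Proof.
  intros HQP HP HQ. assert (H Q + pw (S m0) <= H P).
  { assert (H Q <= H P - pw (S m0)); [|lra]. apply H_le. intros N.
    pose proof (s_monoN N (max N (S m0)) Q ltac:(lia)).
    pose proof (s_strict (max N (S m0)) P Q m0 HQP HP HQ).
    destruct (Nat.ltb_spec m0 (max N (S m0))); [|lia].
    pose proof (H_ub (max N (S m0)) P). lra. }
  pose proof (pw_pos (S m0)). lra.
Qed.

Definition chain (F : nat -> nat -> Prop) :=
  forall n n', (forall m, F n m -> F n' m) \/ (forall m, F n' m -> F n m).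

Lemma cover_sup F N : chain F -> exists n, forall m, (m < N)%nat -> (exists n', F n' m) -> F n m.
Proof.
  intros Hc. induction N. exists 0%nat; intros; lia.
  destruct IHN as [n Hn].
  destruct (classic (exists n', F n' N)) as [[n' Hn']|Hno].
  - destruct (Hc n n') as [Hs|Hs].
    + exists n'. intros m Hm Hex. destruct (Nat.eq_dec m N). subst; auto. apply Hs, Hn; auto; lia.
    + exists n. intros m Hm Hex. destruct (Nat.eq_dec m N). subst; auto. apply Hn; auto; lia.
  - exists n. intros m Hm Hex. destruct (Nat.eq_dec m N). subst; tauto. apply Hn; auto; lia.
Qed.

Lemma cover_inf F N : chain F -> exists n, forall m, (m < N)%nat -> F n m -> forall n', F n' m.
Proof.
  intros Hc. induction N. exists 0%nat; intros; lia.
  destruct IHN as [n Hn].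
  destruct (classic (forall n', F n' N)) as [Hall|Hno].
  - exists n. intros m Hm Hf. destruct (Nat.eq_dec m N). subst; auto. apply Hn; auto; lia.
  - apply not_all_ex_not in Hno. destruct Hno as [n' Hn'].
    destruct (Hc n n') as [Hs|Hs].
    + exists n. intros m Hm Hf. destruct (Nat.eq_dec m N). subst. exfalso; auto. apply Hn; auto; lia.
    + exists n'. intros m Hm Hf. destruct (Nat.eq_dec m N). subst. tauto. apply Hn; auto; lia.
Qed.

Lemma H_sup F : chain F ->
  is_lub (fun x => exists n, x = H (F n)) (H (fun m => exists n, F n m)).
Proof.
  intros Hc. split.
  - intros x [n ->]. apply H_mono. eauto.
  - intros b Hb. apply le_eps. intros eps He. destruct (pw_small eps He) as [N HN].
    destruct (cover_sup F N Hc) as [n Hn].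
    pose proof (H_tail N (fun m => exists n, F n m)).
    rewrite (s_ext N _ (F n)) in H0.
    + pose proof (H_ub N (F n)). assert (H (F n) <= b) by (apply Hb; eauto). lra.
    + intros m Hm. split; eauto.
Qed.

Definition is_glb' (E : R -> Prop) (m : R) : Prop :=
  (forall x, E x -> m <= x) /\ (forall b, (forall x, E x -> b <= x) -> b <= m).

Lemma H_inf F : chain F ->
  is_glb' (fun x => exists n, x = H (F n)) (H (fun m => forall n, F n m)).
Proof.
  intros Hc. split.
  - intros x [n ->]. apply H_mono. eauto.
  - intros b Hb. apply le_eps. intros eps He. destruct (pw_small eps He) as [N HN].
    destruct (cover_inf F N Hc) as [n Hn].
    pose proof (H_tail N (F n)).
    rewrite (s_ext N _ (fun m => forall n, F n m)) in H0.
    + pose proof (H_ub N (fun m => forall n, F n m)). assert (b <= H (F n)) by (apply Hb; eauto). lra.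
    + intros m Hm. split; eauto.
Qed.

Lemma is_lub_ext (E E' : R -> Prop) m : (forall x, E x <-> E' x) -> is_lub E m -> is_lub E' m.
Proof. intros He [H1 H2]. split. intros x Hx; apply H1, He, Hx. intros b Hb; apply H2. intros x Hx; apply Hb, He, Hx. Qed.

Section Dir2.
Context {W T : Type} (le : W -> W -> Prop) (Sf Sb : T -> T) (den : form -> W -> T -> Prop).
Hypothesis Hlin : linear_order le.
Hypothesis Hflow : is_flow Sf Sb.
Hypothesis Hval : birel_valuation le Sf Sb den.
Variable w0 : W.
Variable t0 : T.

Definition sh := shift Sf Sb t0.

Definition pts (m : nat) : W :=
  match enum_FFZ m with (a, b, k) =>
    epsilon (inhabits w0) (fun w => den a w (sh k) /\ ~ den b w (sh k)) end.

Definition HW (X : W -> Prop) : R := H (fun m => X (pts m)).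

Definition downset (X : W -> Prop) := forall w v, X w -> le v w -> X v.

Lemma downset_chain X Y : downset X -> downset Y -> (forall w, X w -> Y w) \/ (forall w, Y w -> X w).
Proof.
  intros HX HY. destruct (classic (forall w, X w -> Y w)) as [h|h]. auto. right.
  apply not_all_ex_not in h. destruct h as [x hx]. apply imply_to_and in hx. destruct hx as [hx1 hx2].
  intros y hy. destruct Hlin as (_ & _ & _ & tot). destruct (tot x y).
  - exfalso. apply hx2. eapply HY; eauto.
  - eapply HX; eauto.
Qed.

Lemma den_down a t : downset (fun w => den a w t).
Proof.
  destruct Hval as [Hvar Hcl]. destruct Hlin as (rfl & trn & _ & _).
  revert t. induction a; intros t w v Hw Hvw;
  destruct (Hcl w t) as (hA & hO & hI & hC & hN & hP & hG & hH & hU & hS);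
  destruct (Hcl v t) as (hA' & hO' & hI' & hC' & hN' & hP' & hG' & hH' & hU' & hS').
  - eapply Hvar; eauto.
  - apply hA'. apply hA in Hw. destruct Hw; split; [eapply IHa1|eapply IHa2]; eauto.
  - apply hO'. apply hO in Hw. destruct Hw; [left; eapply IHa1|right; eapply IHa2]; eauto.
  - apply hI'. rewrite hI in Hw. intros u Hu. apply Hw. eauto.
  - apply hC'. apply hC in Hw. destruct Hw as (u & Hu1 & Hu2). exists u. split; eauto.
  - apply hN'. apply hN in Hw. eapply IHa; eauto.
  - apply hP'. apply hP in Hw. eapply IHa; eauto.
  - apply hG'. rewrite hG in Hw. intros n; eapply IHa; eauto.
  - apply hH'. rewrite hH in Hw. intros n; eapply IHa; eauto.
  - apply hU'. apply hU in Hw. destruct Hw as (n & Hn1 & Hn2). exists n. split.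
    intros i Hi. eapply IHa1; eauto. eapply IHa2; eauto.
  - apply hS'. apply hS in Hw. destruct Hw as (n & Hn1 & Hn2). exists n. split.
    intros i Hi. eapply IHa1; eauto. eapply IHa2; eauto.
Qed.

Lemma HW_ext X Y : (forall w, X w <-> Y w) -> HW X = HW Y.
Proof. intros. apply H_ext. intros; auto. Qed.

Lemma HW_mono X Y : (forall w, X w -> Y w) -> HW X <= HW Y.
Proof. intros. apply H_mono. intros; auto. Qed.

Lemma HW_min X Y : downset X -> downset Y -> HW (fun w => X w /\ Y w) = Rmin (HW X) (HW Y).
Proof.
  intros HX HY. destruct (downset_chain X Y HX HY) as [h|h].
  - rewrite Rmin_left by (apply HW_mono; auto). apply HW_ext. firstorder.
  - rewrite Rmin_right by (apply HW_mono; auto). apply HW_ext. firstorder.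
Qed.

Lemma HW_max X Y : downset X -> downset Y -> HW (fun w => X w \/ Y w) = Rmax (HW X) (HW Y).
Proof.
  intros HX HY. destruct (downset_chain X Y HX HY) as [h|h].
  - rewrite Rmax_right by (apply HW_mono; auto). apply HW_ext. firstorder.
  - rewrite Rmax_left by (apply HW_mono; auto). apply HW_ext. firstorder.
Qed.

Lemma chain_of (F : nat -> W -> Prop) : (forall n, downset (F n)) -> chain (fun n m => F n (pts m)).
Proof.
  intros HF n n'. destruct (downset_chain (F n) (F n') (HF n) (HF n')); [left|right]; intros; auto.
Qed.

Lemma witness a b k : (exists w, den a w (sh k) /\ ~ den b w (sh k)) ->
  exists m, den a (pts m) (sh k) /\ ~ den b (pts m) (sh k).
Proof.
  intros Hex. destruct (enum_FFZ_surj a b k) as [m Hm]. exists m. unfold pts. rewrite Hm.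
  apply (epsilon_spec (inhabits w0) (fun w => den a w (sh k) /\ ~ den b w (sh k))). exact Hex.
Qed.

Lemma fold_min (A : nat -> W -> Prop) (Bs : W -> Prop) n s0 :
  (forall i, downset (A i)) -> downset Bs ->
  HW (fun w => (forall i, (s0 <= i < s0 + n)%nat -> A i w) /\ Bs w) =
  fold_right Rmin (HW Bs) (map (fun i => HW (A i)) (seq s0 n)).
Proof.
  intros HA HB. revert s0. induction n; intros s0; simpl.
  - apply HW_ext. intros w. split; [tauto|]. intros; split; auto; intros; lia.
  - rewrite <- IHn. rewrite <- HW_min.
    + apply HW_ext. intros w. split.
      * intros [h1 h2]. split. apply h1; lia. split; auto. intros; apply h1; lia.
      * intros [h1 [h2 h3]]. split; auto. intros i Hi. destruct (Nat.eq_dec i s0). subst; auto.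
        apply h2; lia.
    + apply HA.
    + intros w v [h1 h2] hv. split. intros i Hi. eapply HA; eauto. eapply HB; eauto.
Qed.

Definition V' (a : form) (k : Z) : R := HW (fun w => den a w (sh k)).

Lemma V'_real : real_valuation Z.succ Z.pred V'.
Proof.
  destruct Hval as [Hvar Hcl]. destruct Hlin as (rfl & trn & asy & tot).
  split. { intros; apply H_bounds. }
  intros k.
  assert (Hc := fun w => Hcl w (sh k)).
  refine (conj _ (conj _ (conj _ (conj _ (conj _ (conj _ (conj _ (conj _ (conj _ _))))))))).
  - intros a b. unfold V'. rewrite <- HW_min by apply den_down. apply HW_ext. intros w.
    apply (Hc w).
  - intros a b. unfold V'. rewrite <- HW_max by apply den_down. apply HW_ext. intros w.
    apply (Hc w).
  - intros a b. unfold V'.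
    destruct (classic (forall w, den a w (sh k) -> den b w (sh k))) as [h|h].
    + destruct Rle_dec as [_|n]; [|exfalso; apply n, HW_mono, h].
      rewrite <- (H_True). apply H_ext. intros m. split; [tauto|]. intros _.
      apply (Hc (pts m)). intros v _ hv. auto.
    + apply not_all_ex_not in h. destruct h as [x hx]. apply imply_to_and in hx.
      assert (E : forall w, den (Imp a b) w (sh k) <-> den b w (sh k)).
      { intros w. rewrite (proj1 (proj2 (proj2 (Hc w)))). split.
        - intros hw. destruct (tot w x).
          + apply hw. apply rfl. eapply den_down; eauto. apply hx.
          + exfalso. apply hx. apply hw; auto. apply hx.
        - intros hw v hv _. eapply den_down; eauto. }
      rewrite (HW_ext _ _ E). destruct Rle_dec as [r|]; [|reflexivity]. exfalso.
      destruct (witness a b k) as [m [hm1 hm2]]. eauto.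
      assert (HW (fun w => den b w (sh k)) < HW (fun w => den a w (sh k))).
      { apply (H_strict _ _ m); auto. intros m' hm'.
        destruct (downset_chain _ _ (den_down a (sh k)) (den_down b (sh k))) as [h|h]; auto.
        exfalso; apply hx; apply h, hx. }
      lra.
  - intros a b. unfold V'.
    destruct (classic (forall w, den a w (sh k) -> den b w (sh k))) as [h|h].
    + destruct Rle_dec as [_|n]; [|exfalso; apply n, HW_mono, h].
      rewrite <- (H_False). apply H_ext. intros m. split; [|tauto]. intros hm.
      apply (Hc (pts m)) in hm. destruct hm as (v & _ & hv1 & hv2). auto.
    + apply not_all_ex_not in h. destruct h as [x hx]. apply imply_to_and in hx.
      assert (E : forall w, den (Coimp a b) w (sh k) <-> den a w (sh k)).
      { intros w. rewrite (proj1 (proj2 (proj2 (proj2 (Hc w))))). split.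
        - intros (v & hv & hv1 & hv2). eapply den_down; eauto.
        - intros hw. destruct (classic (den b w (sh k))) as [hb|hb].
          + exists x. destruct (tot x w).
            * exfalso. apply hx. eapply den_down; eauto.
            * split; [auto|exact hx].
          + exists w. auto. }
      rewrite (HW_ext _ _ E). destruct Rle_dec as [r|]; [|reflexivity]. exfalso.
      destruct (witness a b k) as [m [hm1 hm2]]. eauto.
      assert (HW (fun w => den b w (sh k)) < HW (fun w => den a w (sh k))).
      { apply (H_strict _ _ m); auto. intros m' hm'.
        destruct (downset_chain _ _ (den_down a (sh k)) (den_down b (sh k))) as [h|h]; auto.
        exfalso; apply hx; apply h, hx. }
      lra.
  - intros a. unfold V'. apply HW_ext. intros w. rewrite (proj1 (proj2 (proj2 (proj2 (proj2 (Hc w)))))).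
    unfold sh. rewrite shift_succ by exact Hflow. reflexivity.
  - intros a. unfold V'. apply HW_ext. intros w. rewrite (proj1 (proj2 (proj2 (proj2 (proj2 (proj2 (Hc w))))))).
    unfold sh. rewrite shift_pred by exact Hflow. reflexivity.
  - intros a. unfold V'.
    assert (E : forall w, den (Glob a) w (sh k) <-> forall n, den a w (sh (iterf n Z.succ k))).
    { intros w. rewrite (proj1 (proj2 (proj2 (proj2 (proj2 (proj2 (proj2 (Hc w)))))))).
      unfold sh. setoid_rewrite iter_shift_S; [reflexivity|exact Hflow]. }
    rewrite (HW_ext _ _ E).
    exact (H_inf (fun n m => den a (pts m) (sh (iterf n Z.succ k)))
       (chain_of (fun n w => den a w (sh (iterf n Z.succ k))) (fun n => den_down _ _))).
  - intros a. unfold V'.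
    assert (E : forall w, den (Hist a) w (sh k) <-> forall n, den a w (sh (iterf n Z.pred k))).
    { intros w. rewrite (proj1 (proj2 (proj2 (proj2 (proj2 (proj2 (proj2 (proj2 (Hc w))))))))).
      unfold sh. setoid_rewrite iter_shift_Sinv; [reflexivity|exact Hflow]. }
    rewrite (HW_ext _ _ E).
    exact (H_inf (fun n m => den a (pts m) (sh (iterf n Z.pred k)))
       (chain_of (fun n w => den a w (sh (iterf n Z.pred k))) (fun n => den_down _ _))).
  - intros a b. unfold V'.
    set (F := fun n w => (forall i, (0 <= i < 0 + n)%nat -> den a w (sh (iterf i Z.succ k)))
                         /\ den b w (sh (iterf n Z.succ k))).
    assert (E : forall w, den (Until a b) w (sh k) <-> exists n, F n w).
    { intros w. rewrite (proj1 (proj2 (proj2 (proj2 (proj2 (proj2 (proj2 (proj2 (proj2 (Hc w)))))))))).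
      unfold F, sh. setoid_rewrite iter_shift_S; [|exact Hflow|exact Hflow].
      split; intros [n [h1 h2]]; exists n; split; auto; intros i Hi; apply h1; lia. }
    rewrite (HW_ext _ _ E).
    assert (HF : forall n, downset (F n)).
    { intros n w v [h1 h2] hv. split. intros i Hi. eapply den_down; eauto. eapply den_down; eauto. }
    eapply is_lub_ext; [|exact (H_sup (fun n m => F n (pts m)) (chain_of F HF))].
    intros x. simpl. split; intros [n hn]; exists n; rewrite hn; [|symmetry];
      change (H (fun m => F n (pts m))) with (HW (F n)); unfold F, min_prefix;
      (apply fold_min; [intros; apply den_down|apply den_down]).
  - intros a b. unfold V'.
    set (F := fun n w => (forall i, (0 <= i < 0 + n)%nat -> den a w (sh (iterf i Z.pred k)))
                         /\ den b w (sh (iterf n Z.pred k))).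
    assert (E : forall w, den (Since a b) w (sh k) <-> exists n, F n w).
    { intros w. rewrite (proj2 (proj2 (proj2 (proj2 (proj2 (proj2 (proj2 (proj2 (proj2 (Hc w)))))))))).
      unfold F, sh. setoid_rewrite iter_shift_Sinv; [|exact Hflow|exact Hflow].
      split; intros [n [h1 h2]]; exists n; split; auto; intros i Hi; apply h1; lia. }
    rewrite (HW_ext _ _ E).
    assert (HF : forall n, downset (F n)).
    { intros n w v [h1 h2] hv. split. intros i Hi. eapply den_down; eauto. eapply den_down; eauto. }
    eapply is_lub_ext; [|exact (H_sup (fun n m => F n (pts m)) (chain_of F HF))].
    intros x. simpl. split; intros [n hn]; exists n; rewrite hn; [|symmetry];
      change (H (fun m => F n (pts m))) with (HW (F n)); unfold F, min_prefix;
      (apply fold_min; [intros; apply den_down|apply den_down]).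
Qed.

Lemma dir2_main phi : valid_real phi -> den phi w0 t0.
Proof.
  intros Hv. apply NNPP. intros Hn.
  pose proof (Hv Z Z.succ Z.pred V' Zflow V'_real 0%Z) as H1.
  destruct Hval as [Hvar Hcl]. destruct Hlin as (rfl & _ & _ & _).
  assert (Htop : forall w t, den Top w t).
  { intros w t. apply (Hcl w t). intros; auto. }
  destruct (witness Top phi 0) as [m [hm1 hm2]].
  { exists w0. split; auto. }
  assert (V' phi 0 < V' Top 0).
  { apply (H_strict _ _ m); auto. }
  pose proof (H_bounds (fun m => den Top (pts m) (sh 0))). unfold V', HW in *. lra.
Qed.
End Dir2.

Definition step (z : R) (p : R * R) : R * R :=
  let a := fst p in let b := snd p in
  if Rle_dec z (a + (b - a) / 3) then (b - (b - a) / 3, b) else (a, a + (b - a) / 3).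

Lemma step_prop z p : fst p < snd p ->
  fst p <= fst (step z p) /\ fst (step z p) < snd (step z p) /\ snd (step z p) <= snd p /\
  (z < fst (step z p) \/ snd (step z p) < z).
Proof. intros Hp. unfold step. destruct Rle_dec; simpl; lra. Qed.

Fixpoint nest (u : nat -> R) (l r : R) (n : nat) : R * R :=
  match n with O => (l, r) | S n' => step (u n') (nest u l r n') end.

Section Avoid.
Variable u : nat -> R.
Variables l r : R.
Hypothesis Hlr : l < r.

Lemma nest_lt n : fst (nest u l r n) < snd (nest u l r n).
Proof. induction n; simpl. lra. apply step_prop; auto. Qed.

Lemma nest_mono n m : (n <= m)%nat ->
  fst (nest u l r n) <= fst (nest u l r m) /\ snd (nest u l r m) <= snd (nest u l r n).
Proof.
  induction 1. lra. simpl. pose proof (step_prop (u m) _ (nest_lt m)). lra.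
Qed.

Lemma nest_cross n m : fst (nest u l r n) <= snd (nest u l r m).
Proof.
  pose proof (nest_mono n (max n m) ltac:(lia)). pose proof (nest_mono m (max n m) ltac:(lia)).
  pose proof (nest_lt (max n m)). lra.
Qed.

Lemma avoid_closed : exists c, l <= c <= r /\ forall m, c <> u m.
Proof.
  assert (Hb : bound (fun x => exists n, x = fst (nest u l r n))).
  { exists r. intros x [n ->]. pose proof (nest_cross n 0) as Hnc. simpl in Hnc. lra. }
  destruct (completeness _ Hb (ex_intro _ l (ex_intro _ 0%nat eq_refl))) as [c [Hc1 Hc2]].
  exists c. assert (Hlo : forall n, fst (nest u l r n) <= c) by (intros n; apply Hc1; eauto).
  assert (Hhi : forall n, c <= snd (nest u l r n)).
  { intros n. apply Hc2. intros x [k ->]. apply nest_cross. }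
  split. split. apply (Hlo 0%nat). apply (Hhi 0%nat).
  intros m Hm. pose proof (step_prop (u m) _ (nest_lt m)).
  pose proof (Hlo (S m)). pose proof (Hhi (S m)). simpl in *. lra.
Qed.
End Avoid.

Lemma avoid (u : nat -> R) x y : x < y -> exists c, x < c < y /\ forall m, c <> u m.
Proof.
  intros Hxy. destruct (avoid_closed u (x + (y - x)/3) (y - (y - x)/3)) as [c [Hc1 Hc2]]. lra.
  exists c. split; auto. lra.
Qed.

Lemma Rmin_ge c x y : c <= Rmin x y <-> c <= x /\ c <= y.
Proof. unfold Rmin. destruct Rle_dec; lra. Qed.
Lemma Rmax_ge c x y : c <= Rmax x y <-> c <= x \/ c <= y.
Proof. unfold Rmax. destruct Rle_dec; lra. Qed.

Lemma fold_ge c f g n s0 : c <= fold_right Rmin g (map f (seq s0 n)) <->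
  (forall i, (s0 <= i < s0 + n)%nat -> c <= f i) /\ c <= g.
Proof.
  revert s0. induction n; intros s0; simpl.
  - split. intros; split; auto; intros; lia. tauto.
  - rewrite Rmin_ge, IHn. split.
    + intros [h1 [h2 h3]]. split; auto. intros i Hi. destruct (Nat.eq_dec i s0). subst; auto. apply h2; lia.
    + intros [h1 h2]. split. apply h1; lia. split; auto. intros; apply h1; lia.
Qed.

Lemma min_prefix_ge c f g n : c <= min_prefix f n g <-> (forall i, (i < n)%nat -> c <= f i) /\ c <= g.
Proof.
  unfold min_prefix. rewrite fold_ge. split; intros [h1 h2]; split; auto; intros i Hi; apply h1; lia.
Qed.

Section Dir1.
Context {T : Type} (Sf Sb : T -> T) (V : form -> T -> R).
Hypothesis Hflow : is_flow Sf Sb.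
Hypothesis Hval : real_valuation Sf Sb V.
Variable t0 : T.

Definition sh1 := shift Sf Sb t0.
Definition u (m : nat) : R := let (a, k) := enum_FZ m in V a (sh1 k).

Lemma u_hit a k : exists m, u m = V a (sh1 k).
Proof. destruct (enum_FZ_surj a k) as [m Hm]. exists m. unfold u. rewrite Hm. reflexivity. Qed.

Definition goodc (c : R) : Prop := 0 < c /\ c <= 1 /\ forall m, c <> u m.
Definition Wt := { c : R | goodc c }.
Definition leW (c d : Wt) : Prop := proj1_sig c <= proj1_sig d.
Definition denW (a : form) (c : Wt) (k : Z) : Prop := proj1_sig c <= V a (sh1 k).

Lemma leW_lin : linear_order leW.
Proof.
  unfold leW. split; [|split; [|split]].
  - intros; lra.
  - intros; lra.
  - intros [x hx] [y hy]; simpl; intros. assert (x = y) by lra. subst. f_equal. apply proof_irrelevance.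
  - intros; lra.
Qed.

Lemma neq_c (c : Wt) a k : proj1_sig c <> V a (sh1 k).
Proof. destruct c as [c (h1 & h2 & h3)]. simpl. destruct (u_hit a k) as [m Hm]. rewrite <- Hm. apply h3. Qed.

Lemma denW_birel : birel_valuation leW Z.succ Z.pred denW.
Proof.
  destruct Hval as [Hb Hcl]. unfold denW, leW. split.
  { intros; lra. }
  intros [c (hc1 & hc2 & hc3)] k. simpl.
  destruct (Hcl (sh1 k)) as (hA & hO & hI & hC & hN & hP & hG & hH & hU & hS).
  refine (conj _ (conj _ (conj _ (conj _ (conj _ (conj _ (conj _ (conj _ (conj _ _))))))))).
  - intros a b. rewrite hA. apply Rmin_ge.
  - intros a b. rewrite hO. apply Rmax_ge.
  - intros a b. rewrite hI. pose proof (Hb a (sh1 k)). pose proof (Hb b (sh1 k)).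
    destruct Rle_dec as [r|r].
    + split; [|intros; lra]. intros _ v _ hv. lra.
    + split. intros h v hv1 hv. lra.
      intros h. apply NNPP. intros hn.
      destruct (avoid u (V b (sh1 k)) (Rmin (V a (sh1 k)) c)) as [c' [hc' hc'2]].
      { unfold Rmin; destruct Rle_dec; lra. }
      assert (Rmin (V a (sh1 k)) c <= V a (sh1 k) /\ Rmin (V a (sh1 k)) c <= c) by (unfold Rmin; destruct Rle_dec; lra).
      assert (g : goodc c') by (split; [lra|split; [lra|exact hc'2]]).
      specialize (h (exist _ c' g)). simpl in h. lra.
  - intros a b. rewrite hC. pose proof (Hb a (sh1 k)). pose proof (Hb b (sh1 k)).
    pose proof (neq_c (exist _ c (conj hc1 (conj hc2 hc3))) a k) as hne. simpl in hne.
    destruct Rle_dec as [r|r].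
    + split; [intros; lra|]. intros [[v hv] [h1 [h2 h3]]]. simpl in *. lra.
    + split.
      * intros h.
        destruct (avoid u (Rmax c (V b (sh1 k))) (V a (sh1 k))) as [c' [hc' hc'2]].
        { unfold Rmax; destruct Rle_dec; lra. }
        assert (c <= Rmax c (V b (sh1 k)) /\ V b (sh1 k) <= Rmax c (V b (sh1 k))) by (unfold Rmax; destruct Rle_dec; lra).
        assert (g : goodc c') by (split; [lra|split; [lra|exact hc'2]]).
        exists (exist _ c' g). simpl. lra.
      * intros [[v hv] [h1 [h2 h3]]]. simpl in *. lra.
  - intros a. rewrite hN. unfold sh1. rewrite shift_succ by exact Hflow. reflexivity.
  - intros a. rewrite hP. unfold sh1. rewrite shift_pred by exact Hflow. reflexivity.
  - intros a. destruct (hG a) as [g1 g2]. split.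
    + intros h n. apply Rle_trans with (1 := h). apply g1. exists n. unfold sh1. rewrite iter_shift_S by exact Hflow. reflexivity.
    + intros h. apply g2. intros x [n ->]. unfold sh1. rewrite iter_shift_S by exact Hflow. apply h.
  - intros a. destruct (hH a) as [g1 g2]. split.
    + intros h n. apply Rle_trans with (1 := h). apply g1. exists n. unfold sh1. rewrite iter_shift_Sinv by exact Hflow. reflexivity.
    + intros h. apply g2. intros x [n ->]. unfold sh1. rewrite iter_shift_Sinv by exact Hflow. apply h.
  - intros a b. destruct (hU a b) as [g1 g2].
    pose proof (neq_c (exist _ c (conj hc1 (conj hc2 hc3))) (Until a b) k) as hne. simpl in hne.
    split.
    + intros h. apply NNPP. intros hn. assert (c < V (Until a b) (sh1 k)) by lra.
      assert (V (Until a b) (sh1 k) <= c); [|lra].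
      apply g2. intros x [n ->]. apply Rnot_lt_le. intros hlt. apply hn. exists n.
      apply Rlt_le, min_prefix_ge in hlt. destruct hlt as [q1 q2]. unfold sh1 in *.
      rewrite iter_shift_S in * by exact Hflow. split; auto.
      intros i Hi. specialize (q1 i Hi). rewrite iter_shift_S in q1 by exact Hflow. exact q1.
    + intros [n [h1 h2]]. eapply Rle_trans; [|apply g1; exists n; reflexivity].
      apply min_prefix_ge. unfold sh1 in *. rewrite iter_shift_S by exact Hflow. split; auto.
      intros i Hi. rewrite iter_shift_S by exact Hflow. auto.
  - intros a b. destruct (hS a b) as [g1 g2].
    pose proof (neq_c (exist _ c (conj hc1 (conj hc2 hc3))) (Since a b) k) as hne. simpl in hne.
    split.
    + intros h. apply NNPP. intros hn. assert (c < V (Since a b) (sh1 k)) by lra.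
      assert (V (Since a b) (sh1 k) <= c); [|lra].
      apply g2. intros x [n ->]. apply Rnot_lt_le. intros hlt. apply hn. exists n.
      apply Rlt_le, min_prefix_ge in hlt. destruct hlt as [q1 q2]. unfold sh1 in *.
      rewrite iter_shift_Sinv in * by exact Hflow. split; auto.
      intros i Hi. specialize (q1 i Hi). rewrite iter_shift_Sinv in q1 by exact Hflow. exact q1.
    + intros [n [h1 h2]]. eapply Rle_trans; [|apply g1; exists n; reflexivity].
      apply min_prefix_ge. unfold sh1 in *. rewrite iter_shift_Sinv by exact Hflow. split; auto.
      intros i Hi. rewrite iter_shift_Sinv by exact Hflow. auto.
Qed.

Lemma dir1_main phi : valid_rel phi -> V phi t0 = 1.
Proof.
  intros Hv. destruct Hval as [Hb _]. pose proof (Hb phi t0) as Hbp.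
  destruct (Req_dec (V phi t0) 1) as [e|ne]; auto. exfalso.
  destruct (avoid u (V phi t0) 1) as [c [hc1 hc2]]. lra.
  assert (g : goodc c) by (split; [lra|split; [lra|exact hc2]]).
  pose proof (Hv Wt Z leW Z.succ Z.pred denW leW_lin Zflow denW_birel (exist _ c g) 0%Z) as H0.
  unfold denW in H0. simpl in H0. unfold sh1 in H0. rewrite shift0 in H0. lra.
Qed.
End Dir1.

Theorem theorem3p3 : forall phi : form, valid_real phi <-> valid_rel phi.
Proof.
  intros phi. split.
  - intros Hv W T le S Sinv den Hl Hf Hd w t. exact (dir2_main le S Sinv den Hl Hf Hd w t phi Hv).
  - intros Hv T S Sinv V Hf Hr t. exact (dir1_main S Sinv V Hf Hr t phi Hv).
Qed.
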